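(* Fix a finite candidate set $C$ with $|C|=m$, and work on $\mathcal E(C)$, the elections with candidate set $C$. (a) If $\mathcal K$ is a reversal-symmetric $m$-consensus on $\mathcal E(C)$ and $d$ is a reversal-symmetric map $\mathcal E(C)\times\mathcal E(C)\to[0,\infty]$, then $\mathcal R(\mathcal K,d)$ is reversal symmetric, i.e. $\mathcal R(\mathcal K,d)(\mathrm{rev}(E))=\{\mathrm{rev}(r):r\in\mathcal R(\mathcal K,d)(E)\}$ for all $E$. (b) Conversely, if $R$ is a reversal-symmetric social welfare rule on $\mathcal E(C)$ that is distance rationalizable, then $R$ is distance rationalizable with respect to some $(\mathcal K,d)$ with $\mathcal K$ and $d$ both reversal symmetric.
   Context: $L(C)$ is the set of strict linear orders of $C$. An election with candidate set $C$ is $E=(C,V,\pi)$ with $V$ a finite nonempty subset of a fixed countably infinite voter set $V^*$ and $\pi:V\to L(C)$; $\mathcal E(C)$ is the set of these. For $\rho\in L(C)$, $\mathrm{rev}(\rho)$ is the reversed order, and $\mathrm{rev}(C,V,\pi)=(C,V,\mathrm{rev}\circ\pi)$. A social welfare rule on $\mathcal E(C)$ assigns to each $E$ a nonempty subset $R(E)\subseteq L(C)$; it is reversal symmetric if $R(\mathrm{rev}(E))=\mathrm{rev}(R(E))$. An $m$-consensus is a map $\mathcal K$ from $D(\mathcal K)\subseteq\mathcal E(C)$ to $L(C)$, $\mathcal K_r=\mathcal K^{-1}(r)$; it is reversal symmetric if $D(\mathcal K)$ is closed under $\mathrm{rev}$ and $\mathcal K(\mathrm{rev}(E))=\mathrm{rev}(\mathcal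 K(E))$. A map $d$ is reversal symmetric if $d(\mathrm{rev}(E),\mathrm{rev}(E'))=d(E,E')$. A distance is $d:\mathcal E(C)\times\mathcal E(C)\to[0,\infty]$ with $d(E,E)=0$ and the triangle inequality. $d(E,A)=\inf_{F\in A}d(E,F)$ ($\infty$ if $A=\emptyset$), and $\mathcal R(\mathcal K,d)(E)$ is the set of $r\in L(C)$ with $d(E,\mathcal K_r)=\min_{r'\in L(C)}d(E,\mathcal K_{r'})$. $R$ is distance rationalizable with respect to $(\mathcal K,d)$ if $d$ is a distance, $d(x,y)>0$ whenever $x\in\mathcal K_r,y\in\mathcal K_{r'},r\ne r'$, and $R=\mathcal R(\mathcal K,d)$; $R$ is distance rationalizable if some such pair exists. *)

(* Defs.v *)
From HB Require Import structures.
From mathcomp Require Import all_boot.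
From Stdlib Require Import Reals ClassicalEpsilon.

Set Implicit Arguments.
Unset Strict Implicit.
Unset Printing Implicit Defensive.

Definition is_slo (C : finType) (f : {ffun C * C -> bool}) : bool :=
  [&& [forall x, ~~ f (x, x)],
      [forall x, forall y, forall z, f (x, y) && f (y, z) ==> f (x, z)]
    & [forall x, forall y, (x != y) ==> f (x, y) || f (y, x)]].

(* L(C): a strict linear order, as a relation (x,y) |-> "x is ranked above y" *)
Definition linord (C : finType) := {f : {ffun C * C -> bool} | is_slo f}.

Definition rev_rel (C : finType) (f : {ffun C * C -> bool}) : {ffun C * C -> bool} :=
  [ffun p => f (p.2, p.1)].

Lemma rev_rel_slo (C : finType) (f : {ffun C * C -> bool}) :
  is_slo f -> is_slo (rev_rel f).
Proof.
case/and3P=> /forallP Hi /forallP Ht /forallP Hl.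
apply/and3P; split.
- by apply/forallP=> x; rewrite /rev_rel ffunE.
- apply/forallP=> x; apply/forallP=> y; apply/forallP=> z.
  rewrite /rev_rel !ffunE /=; apply/implyP=> /andP[h1 h2].
  by move: (Ht z) => /forallP /(_ y) /forallP /(_ x) /implyP; apply; rewrite h2 h1.
- apply/forallP=> x; apply/forallP=> y; rewrite /rev_rel !ffunE /=.
  apply/implyP=> hxy.
  by move: (Hl x) => /forallP /(_ y) /implyP /(_ hxy); rewrite orbC.
Qed.

Definition revL (C : finType) (r : linord C) : linord C :=
  exist _ (rev_rel (val r)) (rev_rel_slo (valP r)).

(* An election (C, V, pi) with V a finite nonempty subset of V* = nat and
   pi : V -> L(C), canonically encoded as the graph of pi listed by
   strictly increasing voter. *)
Definition wf_votes (C : finType) (s : seq (nat * linord C)) : bool :=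
  (s != [::]) && sorted ltn (map fst s).

Definition election (C : finType) := {s : seq (nat * linord C) | wf_votes s}.

Lemma revE_wf (C : finType) (s : seq (nat * linord C)) :
  wf_votes s -> wf_votes (map (fun p => (p.1, revL p.2)) s).
Proof.
case/andP=> hn hs; apply/andP; split.
- by case: s hn {hs}.
- by rewrite -map_comp.
Qed.

Definition revE (C : finType) (E : election C) : election C :=
  exist _ (map (fun p => (p.1, revL p.2)) (val E)) (revE_wf (valP E)).

(* None = oo *)
Definition ext := option R.

Definition ext_nonneg (x : ext) : Prop :=
  match x with Some a => Rle 0 a | None => True end.

Definition ext_le (x y : ext) : Prop :=
  match x, y with
  | _, None => True
  | None, Some _ => False
  | Some a, Some b => Rle a b
  end.

Definition ext_lt (x y : ext) : Prop :=
  match x, y with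
  | None, _ => False
  | Some _, None => True
  | Some a, Some b => Rlt a b
  end.

Definition ext_add (x y : ext) : ext :=
  match x, y with
  | Some a, Some b => Some (Rplus a b)
  | _, _ => None
  end.

Definition is_glb_ext (S : ext -> Prop) (x : ext) : Prop :=
  (forall y, S y -> ext_le x y) /\
  (forall z, (forall y, S y -> ext_le z y) -> ext_le z x).

Lemma ext_inhabited : inhabited ext. Proof. exact: inhabits None. Qed.

(* infimum in [0,oo] (inf of the empty set is oo) *)
Definition ext_inf (S : ext -> Prop) : ext := epsilon ext_inhabited (is_glb_ext S).

Definition emap (C : finType) := election C -> election C -> ext.

Definition nonneg_map (C : finType) (d : emap C) : Prop :=
  forall E F, ext_nonneg (d E F).

Definition is_distance (C : finType) (d : emap C) : Prop :=
  nonneg_map d /\ (forall E, d E E = Some 0%R) /\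
  (forall E F G, ext_le (d E G) (ext_add (d E F) (d F G))).

Definition rev_sym_map (C : finType) (d : emap C) : Prop :=
  forall E F, d (revE E) (revE F) = d E F.

(* an m-consensus: partial map K : D(K) -> L(C); D(K) = {E | K E <> None} *)
Definition consensus (C : finType) := election C -> option (linord C).

Definition inD (C : finType) (K : consensus C) (E : election C) : Prop := K E <> None.

Definition Kr (C : finType) (K : consensus C) (r : linord C) (E : election C) : Prop :=
  K E = Some r.

Definition rev_sym_consensus (C : finType) (K : consensus C) : Prop :=
  (forall E, inD K E -> inD K (revE E)) /\
  (forall E, inD K E -> forall r, K E = Some r -> K (revE E) = Some (revL r)).

Definition dist_set (C : finType) (d : emap C) (E : election C)
  (A : election C -> Prop) : ext :=
  ext_inf (fun x => exists F, A F /\ x = d E F).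

Definition rule (C : finType) := election C -> linord C -> Prop.

Definition RKd (C : finType) (K : consensus C) (d : emap C) : rule C :=
  fun E r => forall r', ext_le (dist_set d E (Kr K r)) (dist_set d E (Kr K r')).

Definition is_swr (C : finType) (R : rule C) : Prop :=
  forall E, exists r, R E r.

Definition rev_sym_rule (C : finType) (R : rule C) : Prop :=
  forall E r, R (revE E) r <-> (exists r0, R E r0 /\ r = revL r0).

Definition dist_rat_wrt (C : finType) (R : rule C) (K : consensus C) (d : emap C) : Prop :=
  is_distance d /\
  (forall r r' x y, Kr K r x -> Kr K r' y -> r <> r' -> ext_lt (Some 0%R) (d x y)) /\
  (forall E r, R E r <-> RKd K d E r).

Definition dist_rat (C : finType) (R : rule C) : Prop :=
  exists K d, dist_rat_wrt R K d.

(* Main.v *)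
Require Import Defs.
From mathcomp Require Import all_boot.
From Stdlib Require Import Reals Lra ClassicalEpsilon Classical FunctionalExtensionality PropExtensionality.
From mathcomp Require Import all_boot.

Set Implicit Arguments.
Unset Strict Implicit.
Unset Printing Implicit Defensive.

Lemma rev_relK (C : finType) (f : {ffun C * C -> bool}) : rev_rel (rev_rel f) = f.
Proof. by apply/ffunP => -[x y]; rewrite /rev_rel !ffunE. Qed.

Lemma revLK (C : finType) (r : linord C) : revL (revL r) = r.
Proof. by apply: val_inj; rewrite /= rev_relK. Qed.

Lemma revL_inj (C : finType) : injective (@revL C).
Proof. by move=> x y h; rewrite -(revLK x) h revLK. Qed.

Lemma revEK (C : finType) (E : election C) : revE (revE E) = E.
Proof.
apply: val_inj => /=; rewrite -map_comp; elim: (val E) => //= -[v r] s IH.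
by rewrite /= revLK IH.
Qed.

Lemma revE_inj (C : finType) : injective (@revE C).
Proof. by move=> x y h; rewrite -(revEK x) h revEK. Qed.

Section PartA.
Variables (C : finType) (K : consensus C) (d : emap C).
Hypotheses (HK : rev_sym_consensus K) (Hd : rev_sym_map d).

Lemma Kr_rev r F : Kr K (revL r) F <-> Kr K r (revE F).
Proof.
rewrite /Kr; split => h.
- by rewrite (HK.2 F ltac:(by rewrite /inD h) (revL r) h) revLK.
- have h2 := HK.2 (revE F) ltac:(by rewrite /inD h) r h.
  by rewrite revEK in h2.
Qed.

Lemma dist_rev E r :
  dist_set d (revE E) (Kr K (revL r)) = dist_set d E (Kr K r).
Proof.
rewrite /dist_set; f_equal; apply: functional_extensionality => x.
apply: propositional_extensionality; split.
- case=> F [hF ->]; exists (revE F); split; first by apply/Kr_rev.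
  by rewrite -Hd revEK.
- case=> F [hF ->]; exists (revE F); split; first by apply/Kr_rev; rewrite revEK.
  by rewrite Hd.
Qed.

Lemma dist_rev' E r :
  dist_set d (revE E) (Kr K r) = dist_set d E (Kr K (revL r)).
Proof. by have := dist_rev E (revL r); rewrite revLK. Qed.

Lemma RKd_rev E r : RKd K d (revE E) r <-> RKd K d E (revL r).
Proof.
rewrite /RKd; split => h r'.
- by have := h (revL r'); rewrite !dist_rev' revLK.
- by rewrite !dist_rev'; apply: h.
Qed.

Lemma partA : rev_sym_rule (RKd K d).
Proof.
move=> E r; rewrite RKd_rev; split.
- by move=> h; exists (revL r); rewrite revLK.
- by case=> r0 [h ->]; rewrite revLK.
Qed.
End PartA.
Local Open Scope R_scope.

Lemma ext_le_refl x : ext_le x x.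
Proof. by case: x => //= a; lra. Qed.

Lemma ext_le_trans x y z : ext_le x y -> ext_le y z -> ext_le x z.
Proof. by case: x; case: y; case: z => //= *; lra. Qed.

Lemma ext_lt_le x y : ext_lt x y -> ext_le x y.
Proof. by case: x; case: y => //= *; lra. Qed.

Lemma ext_lt_not_le x y : ext_lt x y -> ~ ext_le y x.
Proof. by case: x; case: y => //= *; lra. Qed.

Lemma ext_not_le x y : ~ ext_le x y -> ext_lt y x.
Proof. by case: x; case: y => //= *; lra. Qed.

Lemma ext_le_lt_trans x y z : ext_le x y -> ext_lt y z -> ext_lt x z.
Proof. by case: x; case: y; case: z => //= *; lra. Qed.

Lemma ext_lt_le_trans x y z : ext_lt x y -> ext_le y z -> ext_lt x z.
Proof. by case: x; case: y; case: z => //= *; lra. Qed.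

Lemma ext_le_antisym x y : ext_le x y -> ext_le y x -> x = y.
Proof. by case: x; case: y => //= a b *; f_equal; lra. Qed.

Lemma glb_exists (S : ext -> Prop) :
  (forall x, S x -> ext_nonneg x) -> exists g, is_glb_ext S g.
Proof.
move=> Hn.
case: (classic (exists a, S (Some a))) => [[a0 Ha0]|Hno].
- pose E := fun x => S (Some (- x)).
  have hb : bound E by exists 0 => x Hx; have := Hn _ Hx; rewrite /=; lra.
  have hne : exists x, E x by exists (- a0); rewrite /E Ropp_involutive.
  case: (completeness E hb hne) => m [Hub Hl].
  exists (Some (- m)); split.
  + case=> [a|] // Ha /=.
    have : E (- a) by rewrite /E Ropp_involutive.
    move/Hub; lra.
  + case=> [c|] Hz /=.
    * have : is_upper_bound E (- c).
        move=> x Hx; have := Hz _ Hx; rewrite /=; lra.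
      move/Hl; lra.
    * by have := Hz _ Ha0.
- exists None; split.
  + case=> [a|] Ha //; by case: Hno; exists a.
  + by case.
Qed.

Lemma ext_inf_glb (S : ext -> Prop) :
  (forall x, S x -> ext_nonneg x) -> is_glb_ext S (ext_inf S).
Proof. by move=> Hn; apply: epsilon_spec; apply: glb_exists. Qed.

Lemma ext_inf_le (S : ext -> Prop) x :
  (forall x, S x -> ext_nonneg x) -> S x -> ext_le (ext_inf S) x.
Proof. by move=> Hn Sx; apply: (ext_inf_glb Hn).1. Qed.

Lemma ext_inf_ge (S : ext -> Prop) z :
  (forall x, S x -> ext_nonneg x) -> (forall x, S x -> ext_le z x) ->
  ext_le z (ext_inf S).
Proof. by move=> Hn Hz; apply: (ext_inf_glb Hn).2. Qed.

Lemma ext_not_lt x y : ~ ext_lt x y -> ext_le y x.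
Proof. by case: x; case: y => //= *; lra. Qed.

Lemma ext_inf_approx (S : ext -> Prop) y :
  (forall x, S x -> ext_nonneg x) -> ext_lt (ext_inf S) y ->
  exists x, S x /\ ext_lt x y.
Proof.
move=> Hn Hlt; apply: NNPP => Hno.
have : ext_le y (ext_inf S).
  apply: ext_inf_ge => // x Sx; apply: ext_not_lt => hlt.
  by apply: Hno; exists x.
by move/ext_lt_not_le: Hlt.
Qed.
Local Close Scope R_scope.

Definition inf_set (T : eqType) (A : T -> Prop) : Prop :=
  forall l : seq T, exists x, A x /\ x \notin l.

Lemma inf_set_mono (T : eqType) (A B : T -> Prop) :
  (forall x, A x -> B x) -> inf_set A -> inf_set B.
Proof. by move=> hAB hA l; case: (hA l) => x [/hAB ? ?]; exists x. Qed.

Lemma inf_set_ex (T : eqType) (A : T -> Prop) : inf_set A -> exists x, A x.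
Proof. by move=> h; case: (h [::]) => x [? _]; exists x. Qed.

Lemma inf_set_bij (T U : eqType) (A : T -> Prop) (f : T -> U) (g : U -> T) :
  cancel f g -> cancel g f -> inf_set A -> inf_set (fun y => A (g y)).
Proof.
move=> fK gK hA l; case: (hA (map g l)) => x [Ax xl].
exists (f x); rewrite fK; split => //.
apply: contra xl => h; by rewrite -(fK x) map_f.
Qed.

Lemma inf_set_pigeon (T : eqType) (U : finType) (A : T -> Prop) (f : T -> U) :
  inf_set A -> exists y, inf_set (fun x => A x /\ f x = y).
Proof.
move=> hA; apply: NNPP => hno.
have hl : forall y, exists l : seq T, forall x, A x -> f x = y -> x \in l.
  move=> y; apply: NNPP => hy; apply: hno; exists y => l.
  apply: NNPP => hx; apply: hy; exists l => x Ax fx.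
  by apply: NNPP => /negP xl; apply: hx; exists x.
pose L := flatten [seq proj1_sig (constructive_indefinite_description _ (hl y)) | y <- enum U].
case: (hA L) => x [Ax /negP []].
apply/flattenP; exists (proj1_sig (constructive_indefinite_description _ (hl (f x)))).
  by apply: map_f; rewrite mem_enum.
by case: (constructive_indefinite_description _ _) => l /= /(_ x Ax erefl).
Qed.

Lemma not_inf_set (T : eqType) (A : T -> Prop) :
  ~ inf_set A -> exists l : seq T, forall x, A x -> x \in l.
Proof.
move=> h; apply: NNPP => hn; apply: h => l; apply: NNPP => hx; apply: hn.
exists l => x Ax; by apply: NNPP => /negP xl; apply: hx; exists x.
Qed.

Lemma inf_set_or (T : eqType) (A B : T -> Prop) :
  inf_set (fun x => A x \/ B x) -> inf_set A \/ inf_set B.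
Proof.
move=> h; apply: NNPP => /not_or_and [/not_inf_set [lA hA] /not_inf_set [lB hB]].
case: (h (lA ++ lB)) => x [[/hA|/hB] xin]; by rewrite mem_cat xin ?orbT.
Qed.
Lemma uniq_not_sub (T : eqType) (s l : seq T) :
  uniq s -> size l < size s -> exists x, x \in s /\ x \notin l.
Proof.
move=> us hsz; apply: NNPP => hn.
have sub : {subset s <= l}.
  move=> x xs; apply: NNPP => /negP xl; apply: hn; by exists x.
by have := uniq_leq_size us sub; rewrite leqNgt hsz.
Qed.

Section Distrib.
Variables (T L : eqType) (X : T -> Prop) (x0 : L) (s : seq L).
Hypothesis HX : inf_set X.

Let pickf (l : seq T) : T := proj1_sig (constructive_indefinite_description _ (HX l)).
Let pickfP l : X (pickf l) /\ pickf l \notin l.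
Proof. by rewrite /pickf; case: (constructive_indefinite_description _ _). Qed.

Fixpoint gseq (n : nat) : seq T :=
  if n is n'.+1 then rcons (gseq n') (pickf (gseq n')) else [::].
Let h n := pickf (gseq n).

Let gseqE n : gseq n = map h (iota 0 n).
Proof.
elim: n => // n IH.
change (gseq n.+1) with (rcons (gseq n) (pickf (gseq n))).
rewrite -addn1 iotaD map_cat /= cats1 add0n -IH //.
Qed.

Let h_inj : injective h.
Proof.
have key : forall m n, m < n -> h m != h n.
  move=> m n mn; apply/eqP => e.
  have := (pickfP (gseq n)).2; rewrite -/(h n) -e gseqE.
  by rewrite map_f // mem_iota.
move=> m n e; case: (ltngtP m n) => // mn.
- by move: (key _ _ mn); rewrite e eqxx.
- by move: (key _ _ mn); rewrite e eqxx.
Qed.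

Let N := size (x0 :: s).

Let lab (H : T) : L :=
  match excluded_middle_informative (exists n, h n = H) with
  | left e => nth x0 (x0 :: s) (proj1_sig (constructive_indefinite_description _ e) %% N)
  | right _ => x0
  end.

Let labE n : lab (h n) = nth x0 (x0 :: s) (n %% N).
Proof.
rewrite /lab; case: excluded_middle_informative => [e|[]]; last by exists n.
by case: (constructive_indefinite_description _ _) => m /= /h_inj ->.
Qed.

Lemma distrib_ex : exists lab : T -> L,
  (forall H, lab H \in x0 :: s) /\
  forall r, r \in x0 :: s -> inf_set (fun H => X H /\ lab H = r).
Proof.
exists lab; split.
- move=> H; rewrite /lab; case: excluded_middle_informative => [e|_].
  + by apply: mem_nth; rewrite ltn_mod.
  + by rewrite mem_head.
- move=> r rin l.
  pose j := index r (x0 :: s).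
  have jN : j < N by rewrite index_mem.
  pose sq := map (fun k => h (j + k * N)) (iota 0 (size l).+1).
  have usq : uniq sq.
    rewrite map_inj_uniq ?iota_uniq // => k1 k2 /h_inj /eqP.
    by rewrite eqn_add2l eqn_mul2r /N /= => /eqP.
  case: (uniq_not_sub usq (l := l)); first by rewrite size_map size_iota.
  move=> x [/mapP [k _ ->] xl]; exists (h (j + k * N)); split => //.
  split; first by rewrite /h; exact: (pickfP _).1.
  by rewrite labE addnC modnMDl modn_small // nth_index.
Qed.
End Distrib.
Section Phi.
Local Open Scope R_scope.
Variables (T : countType) (rv : T -> T).

Definition phi (x : T) : R := / (INR (pickle x + pickle (rv x)) + 1).

Lemma phi_pos x : (0 < phi x).
Proof. rewrite /phi; apply: Rinv_0_lt_compat; have := pos_INR (pickle x + pickle (rv x)); lra. Qed.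

Lemma phi_small (A : T -> Prop) (eps : R) (x0 : T) :
  inf_set A -> (0 < eps) -> exists x, A x /\ x != x0 /\ (phi x < eps).
Proof.
move=> hA he.
case: (INR_unbounded (/ eps)) => N HN.
case: (hA (x0 :: pmap unpickle (iota 0 N))) => x [Ax].
rewrite inE negb_or => /andP [xx0 xl].
exists x; split => //; split => //.
have hN : leq N (pickle x).
  rewrite leqNgt; apply: contra xl => hx.
  by rewrite mem_pmap -pickleK map_f // mem_iota.
have hle : (INR N <= INR (pickle x + pickle (rv x))).
  by apply: le_INR; apply/leP; apply: leq_trans hN (leq_addr _ _).
rewrite /phi -(Rinv_inv eps).
have hie : (0 < / eps) by apply: Rinv_0_lt_compat.
apply: Rinv_lt_contravar; first by apply: Rmult_lt_0_compat; lra.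
lra.
Qed.
End Phi.
Lemma revL_fix (C : finType) (r0 : linord C) : revL r0 = r0 -> forall r : linord C, revL r = r.
Proof.
move=> h0.
have hv : forall p, val r0 p = val r0 (p.2, p.1).
  move=> p; have := congr1 (fun r : linord C => val r p) h0; by rewrite /= /rev_rel ffunE => <-.
have hC : forall x y : C, x = y.
  move=> x y; apply/eqP; apply: contraT => nxy.
  case/and3P: (valP r0) => /forallP Hi /forallP Ht /forallP Hl.
  move: (Hl x) => /forallP /(_ y) /implyP /(_ nxy).
  rewrite -(hv (x, y)) /= orbb => hxy.
  have hyx : val r0 (y, x) by rewrite hv.
  move: (Ht x) => /forallP /(_ y) /forallP /(_ x) /implyP.
  by rewrite hxy hyx => /(_ isT); rewrite (negbTE (Hi x)).
move=> r; apply: val_inj; apply/ffunP => -[x y].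
by rewrite /= /rev_rel ffunE /= (hC x y).
Qed.

Lemma revE_id (C : finType) : (forall r : linord C, revL r = r) -> forall E : election C, revE E = E.
Proof.
move=> h E; apply: val_inj => /=.
rewrite -[RHS]map_id; apply: eq_map => -[v r] /=; by rewrite h.
Qed.

Definition sgn (C : finType) (E : election C) : bool :=
  match val E with
  | (v, r) :: _ => (enum_rank (val r) < enum_rank (rev_rel (val r)))%N
  | [::] => false
  end.

Lemma sgn_rev (C : finType) : (forall r : linord C, revL r <> r) ->
  forall E : election C, sgn (revE E) = ~~ sgn E.
Proof.
move=> HB E; rewrite /sgn /=.
case: E => -[|[v r] s] /= w; first by case/andP: w.
rewrite rev_relK.
have hne : val r != rev_rel (val r).
  apply/eqP => e; apply: (HB r); apply: val_inj; by rewrite /= -e.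
have hr : (enum_rank (val r) : nat) != enum_rank (rev_rel (val r)).
  by apply: contra hne => /eqP /val_inj /enum_rank_inj e; rewrite -e.
by rewrite ltnNge leq_eqVlt (negbTE hr).
Qed.
Local Open Scope R_scope.
Definition pb (P : Prop) : bool := if excluded_middle_informative P then true else false.
Lemma pbP (P : Prop) : reflect P (pb P).
Proof. by rewrite /pb; case: excluded_middle_informative => h; constructor. Qed.
Lemma pb_iff (P Q : Prop) : (P <-> Q) -> pb P = pb Q.
Proof. by move=> h; apply/idP/idP => /pbP H; apply/pbP; apply/h. Qed.

Lemma nonneg_le x : ext_nonneg x -> ext_le (Some 0) x.
Proof. by case: x. Qed.

Lemma exists_eta (A : eqType) (l : seq A) (f : A -> ext) (P : A -> Prop) (mu : R) :
  (forall a, a \in l -> P a -> ext_lt (Some mu) (f a)) ->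
  exists eta, (mu < eta) /\ forall a, a \in l -> P a -> ext_le (Some eta) (f a).
Proof.
elim: l => [|a l IH] h.
  by exists (mu + 1); split => //; lra.
case: IH => [b bl Pb|eta [he hl]]; first by apply: h => //; rewrite inE bl orbT.
case: (classic (P a)) => Pa.
- have := h a (mem_head _ _) Pa; case Efa: (f a) => [v|] /= hv.
  + exists (Rmin eta ((mu + v) / 2)); split.
      by apply: Rmin_glb_lt => //; lra.
    move=> b; rewrite inE => /orP [/eqP ->|bl] Pb.
    * have := Rmin_r eta ((mu + v) / 2); rewrite Efa /=; lra.
    * have := hl b bl Pb; case: (f b) => //= w hw; have := Rmin_l eta ((mu + v) / 2); lra.
  + exists eta; split => // b; rewrite inE => /orP [/eqP ->|bl] Pb //.
    * by rewrite Efa.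
    * exact: hl.
- exists eta; split => // b; rewrite inE => /orP [/eqP ->|bl] Pb //.
  exact: hl.
Qed.
Section Main.
Variables (C : finType) (Rl : rule C) (K : consensus C) (d : emap C).
Hypotheses (Hswr : is_swr Rl) (Hsym : rev_sym_rule Rl) (Hdist : is_distance d)
  (Hpos : forall r r' x y, Kr K r x -> Kr K r' y -> r <> r' -> ext_lt (Some 0) (d x y))
  (HRK : forall E r, Rl E r <-> RKd K d E r)
  (HB : forall r : linord C, revL r <> r).

Definition s E r := dist_set d E (Kr K r).

Lemma s_nn E r : forall x, (fun x => exists F, Kr K r F /\ x = d E F) x -> ext_nonneg x.
Proof. by move=> x [F [_ ->]]; apply: Hdist.1. Qed.

Lemma s_le E r F : K F = Some r -> ext_le (s E r) (d E F).
Proof. by move=> h; apply: ext_inf_le; [apply: s_nn|exists F]. Qed.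

Lemma s_ge0 E r : ext_le (Some 0) (s E r).
Proof. apply: ext_inf_ge; first exact: s_nn. by move=> x /s_nn /nonneg_le. Qed.

Lemma R_iff E r : Rl E r <-> forall r', ext_le (s E r) (s E r').
Proof. exact: HRK. Qed.

Lemma Rrev E r : Rl (revE E) (revL r) <-> Rl E r.
Proof.
rewrite Hsym; split; first by case=> r0 [h /revL_inj ->].
by move=> h; exists r.
Qed.

Lemma Rrev' E r : Rl (revE E) r <-> Rl E (revL r).
Proof. by have := Rrev E (revL r); rewrite revLK. Qed.

Lemma s_target F a : K F = Some a -> s F a = Some 0.
Proof.
move=> h; apply: ext_le_antisym; last exact: s_ge0.
by have := s_le F h; rewrite (Hdist.2.1 F).
Qed.

Lemma R_target F a t : K F = Some a -> (Rl F t <-> ext_le (s F t) (Some 0)).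
Proof.
move=> h; rewrite R_iff; split.
- by move/(_ a); rewrite (s_target h).
- by move=> h0 r'; apply: ext_le_trans h0 (s_ge0 _ _).
Qed.

Lemma R_K F a : K F = Some a -> Rl F a.
Proof. by move=> h; apply/(R_target _ h); rewrite (s_target h) /=; lra. Qed.

Lemma notR_gt E t r : ~ Rl E t -> Rl E r -> ext_lt (s E r) (s E t).
Proof.
rewrite !R_iff => ht hr; apply: NNPP => hn; apply: ht => r'.
apply: ext_le_trans (ext_not_lt hn) (hr r').
Qed.

Definition incl (G E : election C) := forall r, Rl G r -> Rl E r.

Lemma near X r eta : Rl X r -> ext_lt (s X r) (Some eta) ->
  (forall t, ~ Rl X t -> ext_le (Some eta) (s X t)) ->
  exists H, K H = Some r /\ ext_lt (d X H) (Some eta) /\ incl H X.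
Proof.
move=> hr hlt hgap.
case: (ext_inf_approx (s_nn (E := X) (r := r)) hlt) => x [[H [hH ->]] hdH].
exists H; split => //; split => // t hHt; apply: NNPP => hXt.
have hg := hgap t hXt.
have hs0 : s H t = Some 0.
  by apply: ext_le_antisym; [apply/(R_target _ hH)|apply: s_ge0].
case EdXH: (d X H) hdH => [a|] //= ha.
have : ext_lt (s H t) (Some (eta - a)) by rewrite hs0 /=; lra.
case/(ext_inf_approx (s_nn (E := H) (r := t))) => y [[G [hG ->]] hdHG].
have htri := Hdist.2.2 X H G.
have := s_le X hG.
move: htri hg hdHG; rewrite EdXH.
case: (d H G) => [b|] //=; case: (d X G) => [c|] //=;
  case: (s X t) => [e|] //= *; lra.
Qed.

Lemma cover0 E r : (exists t0, ~ Rl E t0) -> Rl E r ->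
  exists F, K F = Some r /\ incl F E.
Proof.
move=> [t0 ht0] hr.
have hlt := notR_gt ht0 hr.
case Es: (s E r) hlt => [mu|] //= _.
case: (@exists_eta _ (enum {: linord C}) (s E) (fun t => ~ Rl E t) mu).
  by move=> t _ ht; rewrite -Es; apply: notR_gt.
move=> eta [he hall].
case: (near (eta := eta) hr); first by rewrite Es.
  by move=> t ht; apply: hall => //; rewrite mem_enum.
by move=> H [hH [_ hi]]; exists H.
Qed.

Lemma accs F a r : K F = Some a -> Rl F r -> r <> a ->
  inf_set (fun H => K H = Some r /\ incl H F).
Proof.
move=> hF hr hra l.
have hs : s F r = Some 0.
  by apply: ext_le_antisym; [apply/(R_target _ hF)|apply: s_ge0].
case: (@exists_eta _ (enum {: linord C}) (s F) (fun t => ~ Rl F t) 0).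
  by move=> t _ ht; rewrite -hs; apply: notR_gt.
move=> eta1 [he1 hall1].
case: (@exists_eta _ l (d F) (fun H => K H = Some r) 0).
  by move=> H _ hH; apply: (Hpos (r := a) (r' := r)) => //; apply: nesym.
move=> eta2 [he2 hall2].
case: (near (X := F) (r := r) (eta := Rmin eta1 eta2) hr).
- by rewrite hs /=; apply: Rmin_glb_lt.
- move=> t ht; apply: ext_le_trans (hall1 t _ ht); last by rewrite mem_enum.
  by rewrite /=; apply: Rmin_l.
- move=> H [hH [hd hi]]; exists H; split => //.
  apply/negP => Hl; have := hall2 H Hl hH.
  move: hd; case: (d F H) => [x|] //=; have := Rmin_r eta1 eta2; lra.
Qed.

Definition Rset H : {set linord C} := [set r | pb (Rl H r)].

Lemma Rset_eq H1 H2 : Rset H1 = Rset H2 <-> forall r, Rl H1 r <-> Rl H2 r.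
Proof.
split.
- move=> h r; have := congr1 (fun S : {set linord C} => r \in S) h; rewrite /Rset !inE => e.
  by split => h1; apply/pbP; [rewrite -e|rewrite e]; apply/pbP.
- by move=> h; apply/setP => r; rewrite !inE; apply: pb_iff.
Qed.

Lemma RsetP H r : r \in Rset H <-> Rl H r.
Proof. by rewrite inE; split => /pbP. Qed.

Lemma Rset_rev H1 H2 : Rset (revE H1) = Rset (revE H2) <-> Rset H1 = Rset H2.
Proof.
rewrite !Rset_eq; split => h r.
- by rewrite -Rrev (h (revL r)) Rrev.
- by rewrite !Rrev' h.
Qed.

Definition rich H := inf_set (fun H' => Rset H' = Rset H).

Lemma rich_eq H1 H2 : Rset H1 = Rset H2 -> rich H1 -> rich H2.
Proof. by rewrite /rich => ->. Qed.

Lemma rich_rev1 H : rich H -> rich (revE H).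
Proof.
move=> hr; have := inf_set_bij (@revEK C) (@revEK C) hr.
apply: inf_set_mono => y hy.
by apply/Rset_rev; rewrite revEK.
Qed.

Lemma rich_rev H : rich (revE H) <-> rich H.
Proof. by split => [/rich_rev1|/rich_rev1 //]; rewrite revEK. Qed.

Definition pickR H : linord C := proj1_sig (constructive_indefinite_description _ (Hswr H)).
Lemma pickRP H : Rl H (pickR H).
Proof. by rewrite /pickR; case: (constructive_indefinite_description _ _). Qed.

Definition Xs (S : {set linord C}) H := Rset H = S /\ sgn H.

Definition distf (S : {set linord C}) : election C -> linord C :=
  match excluded_middle_informative (exists lab : election C -> linord C,
      (forall H, lab H \in S) /\ forall r, r \in S -> inf_set (fun H => Xs S H /\ lab H = r)) with
  | left e => proj1_sig (constructive_indefinite_description _ e)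
  | right _ => pickR
  end.

Lemma distf_spec S r0 : inf_set (Xs S) -> r0 \in S ->
  (forall H, distf S H \in S) /\ forall r, r \in S -> inf_set (fun H => Xs S H /\ distf S H = r).
Proof.
move=> hX hr0.
have ex : exists lab : election C -> linord C,
      (forall H, lab H \in S) /\ forall r, r \in S -> inf_set (fun H => Xs S H /\ lab H = r).
  case: (@distrib_ex _ _ (Xs S) r0 (enum S) hX) => lab [h1 h2]; exists lab; split.
  - move=> H; have := h1 H; rewrite inE mem_enum => /orP [/eqP ->|] //.
  - by move=> r rS; apply: h2; rewrite inE mem_enum rS orbT.
rewrite /distf; case: excluded_middle_informative => [e|//].
by case: (constructive_indefinite_description _ e).
Qed.

Definition base H : linord C :=
  if pb (rich H) then (if pb (inf_set (Xs (Rset H))) then distf (Rset H) H else pickR H)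
  else match K H with
       | Some a => a
       | None => match K (revE H) with Some b => revL b | None => pickR H end
       end.

Lemma base_in H : Rl H (base H).
Proof.
rewrite /base; case: pbP => hr.
- case: pbP => hx; last exact: pickRP.
  have h0 : pickR H \in Rset H by apply/RsetP; apply: pickRP.
  by apply/RsetP; apply: (distf_spec hx h0).1.
- case EK: (K H) => [a|]; first exact: R_K EK.
  case EK2: (K (revE H)) => [b|]; last exact: pickRP.
  by apply/Rrev'; apply: R_K EK2.
Qed.

Definition ell H : linord C := if sgn H then base H else revL (base (revE H)).

Lemma ell_in H : Rl H (ell H).
Proof. by rewrite /ell; case: (sgn H); [apply: base_in|apply/Rrev'; apply: base_in]. Qed.

Lemma ell_rev H : ell (revE H) = revL (ell H).
Proof.
rewrite /ell (sgn_rev HB); case: (sgn H) => /=; by rewrite ?revEK ?revLK.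
Qed.

Definition inT H := rich H \/ K H <> None \/ K (revE H) <> None.

Lemma inT_rev H : inT (revE H) <-> inT H.
Proof. rewrite /inT rich_rev revEK; tauto. Qed.

Definition Kp H : option (linord C) := if pb (inT H) then Some (ell H) else None.

Definition Zr E := ~ inT E /\ forall r, Rl E r.

Lemma Zr_rev E : Zr (revE E) <-> Zr E.
Proof.
rewrite /Zr inT_rev; split => -[h1 h2]; split => // r.
- by apply/Rrev.
- by apply/Rrev'.
Qed.

Lemma incl_rev G E : incl (revE G) (revE E) <-> incl G E.
Proof.
split => h r.
- by move/Rrev/h/Rrev.
- by move/Rrev'/h/Rrev'.
Qed.

Definition dp (E G : election C) : ext :=
  if E == G then Some 0
  else if pb (inT G /\ ~ Zr E) then
    Some ((if pb (incl G E) then 0 else 1) + (if pb (inT E) then phi (@revE C) G else 0))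
  else None.

Lemma phi_rev G : phi (@revE C) (revE G) = phi (@revE C) G.
Proof. by rewrite /phi revEK addnC. Qed.
Lemma ellK G : ~ rich G -> inT G ->
  K G = Some (ell G) \/ K (revE G) = Some (revL (ell G)).
Proof.
move=> hnr hT.
have hnr' : ~ rich (revE G) by rewrite rich_rev.
rewrite /ell; case: (sgn G); rewrite /base.
- case: pbP => // _.
  case EK: (K G) => [a|]; first by left.
  case EK2: (K (revE G)) => [b|]; first by right; rewrite revLK.
  by exfalso; case: hT => [//|[]].
- case: pbP => // _; rewrite revEK.
  case EK: (K (revE G)) => [a|]; first by right; rewrite revLK.
  case EK2: (K G) => [b|]; first by left; rewrite revLK.
  by exfalso; case: hT => [//|[]].
Qed.

Definition good G r := exists H0, rich H0 /\ Rl H0 r /\ incl H0 G.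

Lemma accRich F a r : K F = Some a -> Rl F r -> r <> a -> good F r.
Proof.
move=> hF hr hra.
have hA := accs hF hr hra.
case: (@inf_set_pigeon _ _ _ Rset hA) => S hS.
case: (inf_set_ex hS) => H0 [[hK hi] hRs].
exists H0; split; last by split => //; apply: R_K hK.
by apply: inf_set_mono hS => H [_ e]; rewrite e hRs.
Qed.

Lemma labX S t : inf_set (Xs S) -> t \in S ->
  inf_set (fun G => inT G /\ ell G = t /\ Rset G = S).
Proof.
move=> hX tS; have [_ h2] := distf_spec hX tS.
apply: inf_set_mono (h2 t tS) => H [[hR hs] hd].
have hrich : rich H.
  by apply: inf_set_mono hX => H' [e _]; rewrite e hR.
split; first by left.
split => //.
rewrite /ell hs /base; case: pbP => // _; case: pbP => [_|]; first by rewrite hR.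
by rewrite hR.
Qed.

Lemma richLab H0 r : rich H0 -> Rl H0 r ->
  inf_set (fun G => inT G /\ ell G = r /\ Rset G = Rset H0).
Proof.
move=> hr hR.
have hsplit : inf_set (fun H => Xs (Rset H0) H \/ Xs (Rset (revE H0)) (revE H)).
  apply: inf_set_mono hr => H e.
  case Es: (sgn H); first by left.
  right; split; first by apply/Rset_rev.
  by rewrite (sgn_rev HB) Es.
case: (inf_set_or hsplit) => hX.
- apply: inf_set_mono (labX hX (t := r) _); last by apply/RsetP.
  by move=> G [? [? ->]].
- have hX' : inf_set (Xs (Rset (revE H0))).
    by have := inf_set_bij (@revEK C) (@revEK C) hX; apply: inf_set_mono => y; rewrite revEK.
  have := labX hX' (t := revL r) ltac:(by apply/RsetP; apply/Rrev).
  move/(inf_set_bij (@revEK C) (@revEK C)); apply: inf_set_mono => y [h1 [h2 h3]].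
  split; first by apply/inT_rev.
  split; first by apply: (@revL_inj C); rewrite -ell_rev.
  by apply/Rset_rev.
Qed.

Lemma Tstar G r : inT G -> Rl G r -> r <> ell G -> good G r.
Proof.
move=> hT hr hne.
case: (classic (rich G)) => hri.
  by exists G; split => //; split.
case: (ellK hri hT) => hK.
- exact: accRich hK hr hne.
- have [H0 [h1 [h2 h3]]] : good (revE G) (revL r).
    apply: (accRich hK); first by apply/Rrev.
    by move/revL_inj.
  exists (revE H0); split; first exact: rich_rev1.
  split; first by apply/Rrev'.
  by apply/incl_rev; rewrite revEK.
Qed.

Lemma goodLab G r : good G r -> inf_set (fun G' => inT G' /\ ell G' = r /\ incl G' G).
Proof.
case=> H0 [h1 [h2 h3]].
apply: inf_set_mono (richLab h1 h2) => G' [a [b c]]; split => //; split => // t ht.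
by apply: h3; move/Rset_eq: c => /(_ t) <-.
Qed.

Lemma cover E r : ~ (forall t, Rl E t) -> Rl E r ->
  exists G, inT G /\ ell G = r /\ incl G E.
Proof.
move=> hn hr.
case: (cover0 (E := E) (r := r)) => //.
  by apply: not_all_ex_not.
move=> F [hK hi].
have hT : inT F by right; left; rewrite hK.
case: (classic (ell F = r)) => he.
  by exists F.
have := goodLab (Tstar hT (R_K hK) (nesym he)).
case/inf_set_ex => G [a [b c]]; exists G; split => //; split => // t /c; exact: hi.
Qed.
Lemma ext_add_Nl x : ext_add None x = None. Proof. by case: x. Qed.
Lemma ext_add_Nr x : ext_add x None = None. Proof. by case: x. Qed.
Lemma ext_le_N x : ext_le x None. Proof. by case: x. Qed.

Lemma dp_nn E G : ext_nonneg (dp E G).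
Proof.
rewrite /dp; case: eqP => _ /=; first lra.
case: pbP => _ //=; have := phi_pos (@revE C) G.
by case: pbP => _; case: pbP => _; lra.
Qed.

Lemma dp_refl E : dp E E = Some 0.
Proof. by rewrite /dp eqxx. Qed.

Lemma dp_tri E F G : ext_le (dp E G) (ext_add (dp E F) (dp F G)).
Proof.
case: (eqVneq E G) => [<-|nEG].
  rewrite dp_refl; have := dp_nn E F; have := dp_nn F E.
  by case: (dp E F) => [a|] //=; case: (dp F E) => [b|] //= *; lra.
case: (eqVneq E F) => [<-|nEF].
  by rewrite dp_refl; case: (dp E G) => [a|] //=; lra.
case: (eqVneq F G) => [<-|nFG].
  by rewrite dp_refl; case: (dp E F) => [a|] //=; lra.
rewrite /dp (negbTE nEG) (negbTE nEF) (negbTE nFG).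
case: (pbP (inT F /\ ~ Zr E)) => [[hF hZE]|_]; last by rewrite ext_add_Nl; apply: ext_le_N.
case: (pbP (inT G /\ ~ Zr F)) => [[hG hZF]|_]; last by rewrite ext_add_Nr; apply: ext_le_N.
case: (pbP (inT G /\ ~ Zr E)) => [_|[]]; last by split.
have hFT : pb (inT F) = true by apply/pbP.
rewrite hFT.
have hb : (if pb (incl G E) then 0 else 1) <=
          (if pb (incl F E) then 0 else 1) + (if pb (incl G F) then 0 else 1).
  case: pbP => hGE; case: pbP => hFE; case: pbP => hGF; try lra.
  by exfalso; apply: hGE => t /hGF /hFE.
have := phi_pos (@revE C) F; have := phi_pos (@revE C) G.
move: hb; case: (pb (incl G E)); case: (pb (incl F E)); case: (pb (incl G F));
  case: (pb (inT E)) => /=; lra.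
Qed.

Lemma dp_rev E G : dp (revE E) (revE G) = dp E G.
Proof.
rewrite /dp (inj_eq (@revE_inj C)).
have e1 : pb (inT (revE G) /\ ~ Zr (revE E)) = pb (inT G /\ ~ Zr E).
  apply: pb_iff; split => -[a b]; split.
  - by apply/inT_rev.
  - by move=> z; apply: b; apply/Zr_rev.
  - by apply/inT_rev.
  - by move=> /Zr_rev.
have e2 : pb (incl (revE G) (revE E)) = pb (incl G E) by apply: pb_iff; apply: incl_rev.
have e3 : pb (inT (revE E)) = pb (inT E) by apply: pb_iff; apply: inT_rev.
by rewrite e1 e2 e3 phi_rev.
Qed.

Lemma KpE G r : Kp G = Some r <-> inT G /\ ell G = r.
Proof.
rewrite /Kp; case: pbP => h; split => //.
- by case=> ->.
- by case=> _ ->.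
- by case.
Qed.

Definition v E r := dist_set dp E (Kr Kp r).

Lemma v_nn E r : forall x, (fun x => exists G, Kr Kp r G /\ x = dp E G) x -> ext_nonneg x.
Proof. by move=> x [G [_ ->]]; apply: dp_nn. Qed.

Lemma inf0 (S : ext -> Prop) : (forall x, S x -> ext_nonneg x) ->
  (forall eps, 0 < eps -> exists x, S x /\ ext_le x (Some eps)) -> ext_inf S = Some 0.
Proof.
move=> hn happ; apply: ext_le_antisym; last first.
  by apply: ext_inf_ge => // x /hn /nonneg_le.
apply: NNPP => /ext_not_le hlt.
case Ev: (ext_inf S) hlt => [c|] /= hc.
- case: (happ (c / 2) ltac:(lra)) => x [Sx hx].
  have := ext_inf_le hn Sx; rewrite Ev.
  by move: hx; case: x {Sx} => [a|] //= *; lra.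
- case: (happ 1 ltac:(lra)) => x [Sx hx].
  have := ext_inf_le hn Sx; rewrite Ev.
  by move: hx; case: x {Sx}.
Qed.

Lemma V1 E r : Zr E -> v E r = None.
Proof.
move=> hZ; apply: ext_le_antisym; first by case: (v E r).
apply: ext_inf_ge; first exact: v_nn.
move=> x [G [/KpE [hG _] ->]].
have nEG : E != G by apply/eqP => e; apply: hZ.1; rewrite e.
rewrite /dp (negbTE nEG); case: pbP => // -[_ []] //.
Qed.

Lemma V2 E r : ~ Zr E -> Rl E r -> v E r = Some 0.
Proof.
move=> hZ hr; apply: inf0; first exact: v_nn.
move=> eps he.
case: (classic (inT E)) => hT.
- case: (classic (ell E = r)) => her.
    exists (Some 0); split; last by rewrite /=; lra.
    by exists E; split; [apply/KpE|rewrite dp_refl].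
  have hg := goodLab (Tstar hT hr (nesym her)).
  case: (phi_small (@revE C) E hg he) => G [[hG [hell hi]] [nGE hph]].
  exists (dp E G); split; first by exists G; split => //; apply/KpE.
  rewrite /dp eq_sym (negbTE nGE); case: pbP => [_|[]]; last by split.
  case: pbP => [_|[]] //; case: pbP => [_|[]] //= ; lra.
- have hn : ~ (forall t, Rl E t) by move=> h; apply: hZ.
  case: (cover hn hr) => G [hG [hell hi]].
  have nEG : E != G by apply/eqP => e; apply: hT; rewrite e.
  exists (dp E G); split; first by exists G; split => //; apply/KpE.
  rewrite /dp (negbTE nEG); case: pbP => [_|[]]; last by split.
  case: pbP => [_|[]] //; case: pbP => [//|_] /=; lra.
Qed.

Lemma V3 E r : ~ Zr E -> ~ Rl E r -> ext_le (Some 1) (v E r).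
Proof.
move=> hZ hr; apply: ext_inf_ge; first exact: v_nn.
move=> x [G [/KpE [hG hell] ->]].
have nEG : E != G by apply/eqP => e; apply: hr; rewrite -hell -e; apply: ell_in.
rewrite /dp (negbTE nEG); case: pbP => [_|[]]; last by split.
case: pbP => [hi|_]; first by exfalso; apply: hr; apply: hi; rewrite -hell; apply: ell_in.
have := phi_pos (@revE C) G; case: pbP => _ /=; lra.
Qed.

Lemma partB_main : rev_sym_consensus Kp /\ rev_sym_map dp /\ dist_rat_wrt Rl Kp dp.
Proof.
split; [split|split].
- move=> E; rewrite /inD /Kp; case: pbP => // hT _.
  by case: pbP => // -[]; apply/inT_rev.
- move=> E _ r /KpE [hT <-]; apply/KpE; split; first by apply/inT_rev.
  by rewrite ell_rev.
- by move=> E G; apply: dp_rev.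
split; [split; [exact: dp_nn|split; [exact: dp_refl|exact: dp_tri]]|split].
- move=> r r' x y /KpE [hx ex] /KpE [hy ey] nr.
  have nxy : x != y by apply/eqP => e; apply: nr; rewrite -ex -ey e.
  rewrite /dp (negbTE nxy); case: pbP => [_|[]]; last first.
    by split => // -[].
  have := phi_pos (@revE C) y; case: (pbP (inT x)) => [_|//]; case: pbP => _ /=; lra.
- move=> E r; split.
  + move=> hr r'; change (ext_le (v E r) (v E r')).
    case: (classic (Zr E)) => hZ; first by rewrite !V1.
    rewrite (V2 hZ hr); apply: ext_inf_ge; first exact: v_nn.
    by move=> x /v_nn /nonneg_le.
  + move=> h; change (forall r', ext_le (v E r) (v E r')) in h.
    case: (classic (Zr E)) => hZ; first exact: hZ.2.
    apply: NNPP => hr.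
    have [r0 hr0] := Hswr E.
    have := h r0; rewrite (V2 hZ hr0).
    move/(ext_le_trans (V3 hZ hr)) => /=; lra.
Qed.
End Main.
Local Close Scope R_scope.

Theorem proposition4p15 (C : finType) :
  (forall (K : consensus C) (d : emap C),
      rev_sym_consensus K -> nonneg_map d -> rev_sym_map d ->
      rev_sym_rule (RKd K d)) /\
  (forall R : rule C,
      is_swr R -> rev_sym_rule R -> dist_rat R ->
      exists (K : consensus C) (d : emap C),
        rev_sym_consensus K /\ rev_sym_map d /\ dist_rat_wrt R K d).
Proof.
split.
- by move=> K d HK _ Hd; apply: partA.
- move=> R Hswr Hsym [K [d [Hdist [Hpos HRK]]]].
  case: (classic (exists r : linord C, revL r = r)) => [[r0 h0]|hno].
  + have hid := revE_id (revL_fix h0).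
    exists K, d; split; [split|split].
    * by move=> E; rewrite hid.
    * by move=> E _ r; rewrite hid (revL_fix h0).
    * by move=> E F; rewrite !hid.
    * by split => //; split.
  + have HB : forall r : linord C, revL r <> r by move=> r e; apply: hno; exists r.
    exists (Kp K Hswr), (dp R K); exact: (partB_main Hswr Hsym Hdist Hpos HRK HB).
Qed.
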